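(* Let $G$ be a transcendental entire function and $g = G'$. Let $\Gamma$ be a curve tending to infinity, meeting no zero of $g$, on which $\mathrm{Im}\, G(z) = \beta$ is constant ($\beta\in\mathbb{R}$) and $X = \mathrm{Re}\, G(z)$ increases as $\Gamma$ is followed towards infinity, with $X \geq \alpha$ for some $\alpha \in \mathbb{R}$. Suppose that $(z_n)$ is a sequence tending to infinity on $\Gamma$ such that $v_n = G(z_n) = X_n + i\beta$ satisfies $v_n = o(|z_n|^2)$ as $n\to\infty$. Then the trajectory of the flow $\dot z = \overline{g(z)}$ which follows $\Gamma$ takes infinite time in tending to infinity.
   Context: Trajectories of $\dot z = \overline{g(z)}$ (paths with $z'(t)=\overline{g(z(t))}$) are level curves of $\mathrm{Im}\, G$ on which $\mathrm{Re}\, G$ increases with $t$. It is not assumed that $X \to +\infty$ as $z\to\infty$ on $\Gamma$. *)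

(* Defs.v *)
From Stdlib Require Import Reals.
From Coquelicot Require Import Coquelicot.

Definition is_poly_fun (F : C -> C) : Prop :=
  exists (n : nat) (a : nat -> C),
    forall z : C, F z = sum_n (fun k => Cmult (a k) (pow_n z k)) n.

(* [G] is entire with complex derivative [g] (Coquelicot's [is_derive] over
   the absolute ring [C] is the complex derivative). *)
Definition entire_with_deriv (G g : C -> C) : Prop :=
  forall z : C, is_derive (K := C_AbsRing) (V := C_NormedModule) G z (g z).

Definition transcendental_entire (G : C -> C) : Prop :=
  (exists g : C -> C, entire_with_deriv G g) /\ ~ is_poly_fun G.

(* Main.v *)
From Stdlib Require Import Reals Lra.
From Coquelicot Require Import Coquelicot.
Require Import Defs.
Open Scope R_scope.

Lemma sqrt2_le2 : sqrt 2 <= 2.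
Proof. assert (H := sqrt_sqrt 2 ltac:(lra)). assert (H0 := sqrt_pos 2). nra. Qed.

Lemma dG2d (G g : C -> C) (HG : entire_with_deriv G g) x y :
  differentiable_pt_lim (fun u v => Re (G (u,v))) x y (Re (g (x,y))) (- Im (g (x,y))).
Proof.
  intros eps.
  destruct (HG (x,y)) as [_ Hd].
  specialize (Hd (x,y) (fun P HP => HP)).
  assert (He : 0 < eps / 2) by (destruct eps; simpl; lra).
  specialize (Hd (mkposreal _ He)). destruct Hd as [d Hd].
  assert (Hd2 : 0 < d / 2) by (destruct d; simpl; lra).
  exists (mkposreal _ Hd2). simpl. intros u v Hu Hv.
  assert (Hm := Cmod_2Rmax (minus (u,v) (x,y))).
  change (Cmod (minus (u,v) (x,y)) <= sqrt 2 * Rmax (Rabs (u - x)) (Rabs (v - y))) in Hm.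
  assert (H2 := sqrt2_le2).
  assert (0 <= Rmax (Rabs (u - x)) (Rabs (v - y))).
  { eapply Rle_trans. apply Rabs_pos. apply Rmax_l. }
  assert (Rmax (Rabs (u - x)) (Rabs (v - y)) < d / 2).
  { apply Rmax_lub_lt; assumption. }
  assert (B : ball (M:=AbsRing_UniformSpace C_AbsRing) (x,y) d (u,v)).
  { change (Cmod (minus (u,v) (x,y)) < d). assert (0 <= sqrt 2) by apply sqrt_pos. nra. }
  specialize (Hd (u,v) B). simpl in Hd.
  match type of Hd with norm ?E0 <= _ => set (E := E0) in Hd end.
  assert (HE : Re E = Re (G (u,v)) - Re (G (x,y)) - (Re (g (x,y)) * (u - x) + - Im (g (x,y)) * (v - y))).
  { unfold E. destruct (G (u,v)), (G (x,y)), (g (x,y)). unfold minus, plus, opp, scal. simpl.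
    unfold Cplus, Copp, Cmult. simpl. ring. }
  rewrite <- HE.
  eapply Rle_trans. apply re_le_Cmod.
  change (Cmod E <= eps * Rmax (Rabs (u - x)) (Rabs (v - y))).
  change (Cmod E <= eps / 2 * Cmod (minus (u,v) (x,y))) in Hd.
  destruct eps as [e ep]; simpl in *.
  assert (0 <= Cmod E) by apply Cmod_ge_0.
  assert (e / 2 * Cmod (minus (u,v) (x,y)) <= e/2 * (sqrt 2 * Rmax (Rabs (u - x)) (Rabs (v - y)))).
  { apply Rmult_le_compat_l; lra. }
  assert (e/2 * (sqrt 2 * Rmax (Rabs (u - x)) (Rabs (v - y))) <= e * Rmax (Rabs (u - x)) (Rabs (v - y))).
  { assert (0 <= e * Rmax (Rabs (u - x)) (Rabs (v - y))) by (apply Rmult_le_pos; lra).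
    assert (0 <= (e * Rmax (Rabs (u - x)) (Rabs (v - y))) * (2 - sqrt 2)) by (apply Rmult_le_pos; lra).
    nra. }
  lra.
Qed.

Lemma deriv_fst (w : R -> C) t l :
  is_derive (K := R_AbsRing) w t l -> derivable_pt_lim (fun t => fst (w t)) t (fst l).
Proof.
  intros H. apply is_derive_Reals.
  unfold is_derive.
  assert (Hc := filterdiff_comp' (K:=R_AbsRing) (U:=R_NormedModule) (V:=prod_NormedModule R_AbsRing R_NormedModule R_NormedModule) (W:=R_NormedModule) w fst t (fun y => scal y l) fst H (filterdiff_linear _ (is_linear_fst))).
  exact Hc.
Qed.
Lemma deriv_snd (w : R -> C) t l :
  is_derive (K := R_AbsRing) w t l -> derivable_pt_lim (fun t => snd (w t)) t (snd l).
Proof.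
  intros H. apply is_derive_Reals.
  unfold is_derive.
  assert (Hc := filterdiff_comp' (K:=R_AbsRing) (U:=R_NormedModule) (V:=prod_NormedModule R_AbsRing R_NormedModule R_NormedModule) (W:=R_NormedModule) w snd t (fun y => scal y l) snd H (filterdiff_linear _ (is_linear_snd))).
  exact Hc.
Qed.

Lemma deriv_X (G g : C -> C) (HG : entire_with_deriv G g) (w : R -> C) t :
  is_derive (K := R_AbsRing) w t (Cconj (g (w t))) ->
  derivable_pt_lim (fun t => Re (G (w t))) t (Re (g (w t)) ^ 2 + Im (g (w t)) ^ 2).
Proof.
  intros H.
  assert (H1 := deriv_fst _ _ _ H). assert (H2 := deriv_snd _ _ _ H).
  assert (H3 := dG2d G g HG (fst (w t)) (snd (w t))).
  rewrite <- surjective_pairing in H3.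
  assert (H4 := derivable_pt_lim_comp_2d _ _ _ _ _ _ _ _ H3 H1 H2).
  replace (Re (g (w t)) ^ 2 + Im (g (w t)) ^ 2) with
    (Re (g (w t)) * fst (Cconj (g (w t))) + - Im (g (w t)) * snd (Cconj (g (w t)))).
  2: { destruct (g (w t)); simpl; ring. }
  apply is_derive_Reals. apply is_derive_Reals in H4.
  eapply is_derive_ext. 2: exact H4.
  intros s. simpl. rewrite <- surjective_pairing. reflexivity.
Qed.

Lemma key (G g : C -> C) (HG : entire_with_deriv G g) (w : R -> C) (a b lam p q : R) :
  0 < lam -> a <= b ->
  (forall t, a <= t <= b -> is_derive (K := R_AbsRing) w t (Cconj (g (w t)))) ->
  p * (Re (w b) - Re (w a)) + q * (Im (w b) - Im (w a)) <=
  (lam * (Re (G (w b)) - Re (G (w a))) + (p^2+q^2) / lam * (b - a)) / 2.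
Proof.
  intros Hl Hab Hd.
  set (K := (p^2+q^2)/lam).
  set (psi := fun t => (p * Re (w t) + q * Im (w t)) - / 2 * (lam * Re (G (w t)) + K * t)).
  set (dpsi := fun t => (p * Re (g (w t)) + q * (- Im (g (w t)))) - / 2 * (lam * (Re (g (w t)) ^ 2 + Im (g (w t)) ^ 2) + K * 1)).
  assert (Hder : forall t, a <= t <= b -> derivable_pt_lim psi t (dpsi t)).
  { intros t Ht. specialize (Hd t Ht).
    assert (H1 := deriv_fst _ _ _ Hd). assert (H2 := deriv_snd _ _ _ Hd).
    assert (H3 := deriv_X G g HG w t Hd).
    assert (H1' := derivable_pt_lim_scal _ p _ _ H1).
    assert (H2' := derivable_pt_lim_scal _ q _ _ H2).
    assert (H12 := derivable_pt_lim_plus _ _ _ _ _ H1' H2').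
    assert (H3' := derivable_pt_lim_scal _ lam _ _ H3).
    assert (H4 := derivable_pt_lim_scal _ K _ _ (derivable_pt_lim_id t)).
    assert (H34 := derivable_pt_lim_plus _ _ _ _ _ H3' H4).
    assert (H34' := derivable_pt_lim_scal _ (/2) _ _ H34).
    assert (H := derivable_pt_lim_minus _ _ _ _ _ H12 H34').
    exact H. }
  assert (Hneg : forall t, dpsi t <= 0).
  { intros t. unfold dpsi, K. set (x := Re (g (w t))). set (y := Im (g (w t))).
    assert (E : (p^2+q^2)/lam = ((lam*x - p)^2 + (lam * (-y) - q)^2)/lam - lam * (x^2+y^2) + 2 * (p * x + q * (-y))).
    { field. lra. }
    rewrite E.
    assert (0 <= ((lam*x - p)^2 + (lam * (-y) - q)^2)/lam).
    { apply Rdiv_le_0_compat; [apply Rplus_le_le_0_compat; apply pow2_ge_0|lra]. }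
    nra. }
  destruct (Req_dec a b) as [Heq|Hne].
  { subst b. assert (0 <= K) by (unfold K; apply Rdiv_le_0_compat; nra). nra. }
  destruct (MVT_gen psi a b dpsi) as [c [Hc Hc2]].
  { intros x Hx. rewrite Rmin_left in Hx by lra. rewrite Rmax_right in Hx by lra.
    apply is_derive_Reals. apply Hder. lra. }
  { intros x Hx. rewrite Rmin_left in Hx by lra. rewrite Rmax_right in Hx by lra.
    apply derivable_continuous_pt. exists (dpsi x). apply Hder. lra. }
  assert (Hc3 : dpsi c * (b - a) <= 0).
  { assert (H := Hneg c). nra. }
  unfold psi in Hc2. fold K. lra.
Qed.

Lemma Cmod_le_sum (z : C) : Cmod z <= 2 * (Rabs (Re z) + Rabs (Im z)).
Proof.
  assert (H := Cmod_2Rmax z). assert (H2 := sqrt2_le2). assert (0 <= sqrt 2) by apply sqrt_pos.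
  assert (Rmax (Rabs (fst z)) (Rabs (snd z)) <= Rabs (Re z) + Rabs (Im z)).
  { unfold Re, Im. apply Rmax_lub; assert (Ha := Rabs_pos (fst z)); assert (Hb := Rabs_pos (snd z)); lra. }
  assert (0 <= Rmax (Rabs (fst z)) (Rabs (snd z))) by (eapply Rle_trans; [apply Rabs_pos|apply Rmax_l]).
  nra.
Qed.

Lemma bounded_gamma (gamma : R -> C) :
  (forall s : R, 0 <= s -> continuity_pt (fun u => Re (gamma u)) s
                 /\ continuity_pt (fun u => Im (gamma u)) s) ->
  forall S, 0 <= S -> exists M, forall s, 0 <= s <= S -> Cmod (gamma s) <= M.
Proof.
  intros Hc S HS.
  set (f := fun u => Rabs (Re (gamma u)) + Rabs (Im (gamma u))).
  destruct (continuity_ab_maj f 0 S HS) as [Mx [HM _]].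
  { intros c Hc'. destruct (Hc c ltac:(lra)) as [H1 H2]. unfold f.
    apply continuity_pt_plus.
    - apply (continuity_pt_comp (fun u => Re (gamma u)) Rabs); auto. apply Rcontinuity_abs.
    - apply (continuity_pt_comp (fun u => Im (gamma u)) Rabs); auto. apply Rcontinuity_abs. }
  exists (2 * f Mx). intros s Hs. eapply Rle_trans. apply Cmod_le_sum.
  specialize (HM s Hs). unfold f in *. lra.
Qed.

Theorem proposition4p1
  (G g : C -> C) (gamma : R -> C) (alpha beta : R) (zs : nat -> C) :
  transcendental_entire G ->
  entire_with_deriv G g ->
  (forall s : R, 0 <= s -> continuity_pt (fun u => Re (gamma u)) s
                 /\ continuity_pt (fun u => Im (gamma u)) s) ->
  filterlim (fun s => Cmod (gamma s)) (Rbar_locally p_infty)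
            (Rbar_locally p_infty) ->
  (forall s : R, 0 <= s -> g (gamma s) <> 0%C) ->
  (forall s : R, 0 <= s -> Im (G (gamma s)) = beta) ->
  (forall s1 s2 : R, 0 <= s1 -> s1 < s2 ->
     Re (G (gamma s1)) < Re (G (gamma s2))) ->
  (forall s : R, 0 <= s -> alpha <= Re (G (gamma s))) ->
  (forall n : nat, exists s : R, 0 <= s /\ zs n = gamma s) ->
  is_lim_seq (fun n => Cmod (zs n)) p_infty ->
  is_lim_seq (fun n => Cmod (G (zs n)) / (Cmod (zs n)) ^ 2) 0 ->
  forall (T : R) (w : R -> C),
    0 < T ->
    (forall t : R, 0 < t < T -> exists s : R, 0 <= s /\ w t = gamma s) ->
    (forall t : R, 0 < t < T ->
       is_derive (K := R_AbsRing) w t (Cconj (g (w t)))) ->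
    ~ filterlim (fun t => Cmod (w t)) (at_left T) (Rbar_locally p_infty).
Proof.
  intros _ HG Hgc _ _ _ Hmono _ Hzs Hzinf Hratio T w HT Hwg Hwd Hlim.
  assert (Hle : forall s1 s2, 0 <= s1 -> 0 <= s2 ->
            Re (G (gamma s1)) <= Re (G (gamma s2)) -> s1 <= s2).
  { intros s1 s2 H1 H2 H. destruct (Rle_or_lt s1 s2) as [|Hlt]; auto.
    specialize (Hmono s2 s1 H2 Hlt). lra. }
  set (X := fun t => Re (G (w t))).
  set (t0 := T / 2).
  assert (Ht0 : 0 < t0 < T) by (unfold t0; lra).
  destruct (Hwg t0 Ht0) as [s0 [Hs0 Hws0]].
  destruct (bounded_gamma gamma Hgc s0 Hs0) as [M0 HM0].
  set (c := Cmod (w t0)).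
  assert (Hc0 : 0 <= c) by apply Cmod_ge_0.
  set (X0 := X t0).
  set (K := 2 * T * Rabs X0).
  assert (HK : 0 <= K) by (unfold K; assert (H := Rabs_pos X0); nra).
  set (R0 := Rmax (Rmax M0 (4 * c)) (Rmax (5 * K + 1) 1)).
  assert (HR0 : M0 <= R0 /\ 4 * c <= R0 /\ 5 * K + 1 <= R0 /\ 1 <= R0).
  { unfold R0. repeat split.
    - eapply Rle_trans; [apply Rmax_l|apply Rmax_l].
    - eapply Rle_trans; [apply Rmax_r|apply Rmax_l].
    - eapply Rle_trans; [apply Rmax_l|apply Rmax_r].
    - eapply Rle_trans; [apply Rmax_r|apply Rmax_r]. }
  assert (Heps : 0 < / (8 * T)) by (apply Rinv_0_lt_compat; lra).
  apply is_lim_seq_spec in Hzinf. apply is_lim_seq_spec in Hratio.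
  destruct (Hzinf R0) as [N1 HN1].
  destruct (Hratio (mkposreal _ Heps)) as [N2 HN2].
  set (n := Nat.max N1 N2).
  specialize (HN1 n (Nat.le_max_l _ _)). specialize (HN2 n (Nat.le_max_r _ _)).
  simpl in HN1, HN2.
  destruct (Hzs n) as [sn [Hsn Hzsn]].
  set (r := Cmod (zs n)) in *.
  assert (Hr1 : 1 < r) by lra.
  assert (Hsn0 : s0 < sn).
  { destruct (Rle_or_lt sn s0) as [H|H]; auto.
    assert (H' := HM0 sn (conj Hsn H)). rewrite <- Hzsn in H'. fold r in H'. lra. }
  set (Xn := Re (G (zs n))).
  assert (HX0n : X0 < Xn).
  { unfold X0, X, Xn. rewrite Hws0, Hzsn. apply Hmono; auto. }
  destruct (bounded_gamma gamma Hgc sn Hsn) as [Mn HMn].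
  assert (Ht1 : exists t1, t0 < t1 < T /\ Xn <= X t1).
  { assert (HL := Hlim (fun x => Mn < x) (ex_intro _ Mn (fun x Hx => Hx))).
    destruct HL as [d Hd].
    set (t1 := T - Rmin d t0 / 2).
    assert (Hm1 : 0 < Rmin d t0) by (apply Rmin_pos; [apply cond_pos|lra]).
    assert (Hm2 : Rmin d t0 <= d) by apply Rmin_l.
    assert (Hm3 : Rmin d t0 <= t0) by apply Rmin_r.
    assert (Ht1T : t0 < t1 < T) by (unfold t1; unfold t0 in Hm1, Hm3 |- *; lra).
    exists t1. split; auto.
    assert (Hb : ball T d t1).
    { change (Rabs (t1 - T) < d). unfold t1. rewrite Rabs_left by lra. lra. }
    specialize (Hd t1 Hb (proj2 Ht1T)). simpl in Hd.
    destruct (Rle_or_lt Xn (X t1)) as [H|H]; auto.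
    destruct (Hwg t1 ltac:(lra)) as [s1 [Hs1 Hws1]].
    assert (s1 <= sn).
    { apply Hle; auto. unfold X in H. rewrite Hws1 in H. rewrite <- Hzsn. fold Xn. lra. }
    assert (H' := HMn s1 (conj Hs1 H0)). rewrite <- Hws1 in H'. lra. }
  destruct Ht1 as [t1 [Ht1 HXt1]].
  assert (HXd : forall t, 0 < t < T -> derivable_pt_lim X t (Re (g (w t)) ^ 2 + Im (g (w t)) ^ 2)).
  { intros t Ht. apply (deriv_X G g HG w t (Hwd t Ht)). }
  assert (Htn : exists tn, t0 <= tn <= t1 /\ X tn = Xn).
  { destruct (Rle_lt_or_eq_dec _ _ HXt1) as [Hlt|Heq].
    - destruct (Ranalysis5.IVT_interv (fun t => X t - Xn) t0 t1) as [tn [Htn1 Htn2]].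
      + intros a Ha. apply continuity_pt_minus. apply derivable_continuous_pt.
        exists (Re (g (w a)) ^ 2 + Im (g (w a)) ^ 2). apply HXd. lra.
        apply continuity_pt_const. intros u v. reflexivity.
      + lra.
      + fold X0. lra.
      + lra.
      + exists tn. split; auto. lra.
    - exists t1. split; [lra|auto]. }
  destruct Htn as [tn [Htn HXtn]].
  assert (Hwtn : w tn = zs n).
  { destruct (Hwg tn ltac:(lra)) as [sg [Hsg Hwsg]].
    unfold X in HXtn. rewrite Hwsg in HXtn. unfold Xn in HXtn. rewrite Hzsn in HXtn.
    assert (sg = sn).
    { apply Rle_antisym; apply Hle; auto; lra. }
    subst sg. rewrite Hwsg, Hzsn. reflexivity. }
  set (p := Re (zs n) - Re (w t0)). set (q := Im (zs n) - Im (w t0)).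
  assert (Hk := key G g HG w t0 tn (4 * T) p q ltac:(lra) (proj1 Htn)
                  (fun t Ht => Hwd t ltac:(lra))).
  rewrite Hwtn in Hk. fold p q in Hk. fold Xn in Hk. fold (X t0) X0 in Hk.
  set (D2 := p ^ 2 + q ^ 2) in *.
  assert (HD2 : 0 <= D2) by (unfold D2; apply Rplus_le_le_0_compat; apply pow2_ge_0).
  assert (Hk2 : D2 <= 2 * T * (Xn - X0) + D2 / 8).
  { assert (D2 / (4 * T) * (tn - t0) <= D2 / 4).
    { unfold Rdiv. assert (0 <= D2 * / (4 * T)) by (apply Rmult_le_pos; [lra|left; apply Rinv_0_lt_compat; lra]).
      assert (D2 * / (4 * T) * (tn - t0) <= D2 * / (4 * T) * T) by (apply Rmult_le_compat_l; lra).
      replace (D2 * / (4 * T) * T) with (D2 * / 4) in H0 by (field; lra). lra. }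
    replace (p * p + q * q) with D2 in Hk by (unfold D2; ring). lra. }
  assert (Hr2 : 0 < r ^ 2) by nra.
  assert (HGn : Xn <= r ^ 2 / (8 * T)).
  { unfold Xn. eapply Rle_trans. apply (Rle_trans _ _ _ (Rle_abs _) (re_le_Cmod _)).
    rewrite Rminus_0_r in HN2. apply Rabs_lt_between in HN2. destruct HN2 as [_ HN2].
    assert (H := Rmult_lt_compat_r (r ^ 2) _ _ Hr2 HN2).
    unfold Rdiv in H. rewrite Rmult_assoc, Rinv_l, Rmult_1_r in H by lra.
    unfold Rdiv. lra. }
  assert (HXn2 : 2 * T * Xn <= r ^ 2 / 4).
  { assert (H := Rmult_le_compat_l (2 * T) _ _ ltac:(lra) HGn).
    replace (2 * T * (r ^ 2 / (8 * T))) with (r ^ 2 / 4) in H by (field; lra). exact H. }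
  assert (HX0K : - (2 * T * X0) <= K).
  { unfold K. assert (H := Rle_abs (- X0)). rewrite Rabs_Ropp in H. nra. }
  assert (HD : D2 = Cmod (zs n - w t0) ^ 2).
  { rewrite Cmod2_alt. unfold D2, p, q, Re, Im, Cminus, Cplus, Copp. simpl. ring. }
  assert (Htri : r <= Cmod (zs n - w t0) + c).
  { unfold r, c. replace (zs n) with ((zs n - w t0) + w t0)%C at 1 by ring. apply Cmod_triangle. }
  assert (HDr : 3 * r / 4 <= Cmod (zs n - w t0)) by lra.
  assert (HD3 : (3 * r / 4) ^ 2 <= D2).
  { rewrite HD. apply pow_incr. lra. }
  nra.
Qed.
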